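(* Let $V$ be a finite set and $\{\eta(t),t\ge0\}$ a consistent configuration process on $\Omega$. Then for all $f:\Omega\to\mathbb R$, all $\eta\in\Omega$ and all $t\ge0$, $$\sum_{i\in V}\mathbb E_\eta\big[\eta_i(t)f(\eta(t)-\delta_i)\big]=\sum_{i\in V}\eta_i\,\mathbb E_{\eta-\delta_i}\big[f(\eta(t))\big],$$ where terms with $\eta_i(t)=0$, resp. $\eta_i=0$, are zero.
   Context: $\Lambda\subseteq\mathbb N_0$ is the single-site state space, $\Omega=\{\eta\in\Lambda^V:\sum_x\eta_x<\infty\}$, $\delta_z$ the configuration with one particle at $z$. A configuration process is a Markov process on $\Omega$ conserving the number of particles, with generator $\mathcal L$; $\mathbb E_\eta$ denotes expectation for the process started at $\eta$. It is consistent if $[\mathcal L,\mathcal A]=0$, where $\mathcal Af(\eta)=\sum_{x\in V}\eta_xf(\eta-\delta_x)$ (terms with $\eta_x=0$ are zero). *)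

(* Defs.v *)
From HB Require Import structures.
From mathcomp Require Import all_boot all_order all_algebra.
From mathcomp Require Import all_classical all_reals all_analysis.
Set Implicit Arguments. Unset Strict Implicit. Unset Printing Implicit Defensive.
Import Order.TTheory GRing.Theory Num.Theory.
Local Open Scope ring_scope.

Section ConfigProcess.
Variables (V : finType) (R : realType).

Definition conf := {ffun V -> nat}.

Definition tot (eta : conf) : nat := (\sum_(x : V) eta x)%N.

(* eta - delta_x  (only used where eta_x > 0, or multiplied by eta_x = 0) *)
Definition subdelta (eta : conf) (x : V) : conf :=
  [ffun y => if y == x then (eta y).-1 else eta y].

Definition inOmega (Lam : pred nat) (eta : conf) : bool := [forall x, Lam (eta x)].

(* Lambda is downward closed, so that eta - delta_x is in Omega when eta_x > 0 *)
Definition down_closed (Lam : pred nat) : Prop := forall n, Lam n.+1 -> Lam n.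

Definition lift_conf n (g : {ffun V -> 'I_n}) : conf := [ffun x => nat_of_ord (g x)].

(* Generator of the Markov jump process with rates q (eta -> xi):
   L f (eta) = sum_xi q(eta,xi) (f xi - f eta); since the number of particles
   is conserved, xi ranges over the finite set of configurations with tot xi = tot eta. *)
Definition gen (q : conf -> conf -> R) (f : conf -> R) (eta : conf) : R :=
  \sum_(g : {ffun V -> 'I_(tot eta).+1} | tot (lift_conf g) == tot eta)
     q eta (lift_conf g) * (f (lift_conf g) - f eta).

Definition annih (f : conf -> R) (eta : conf) : R :=
  \sum_(x : V) (eta x)%:R * f (subdelta eta x).

Definition config_process (Lam : pred nat) (q : conf -> conf -> R) : Prop :=
  (forall eta xi, eta != xi -> 0 <= q eta xi) /\
  (forall eta xi, q eta xi != 0 ->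
     [/\ inOmega Lam eta, inOmega Lam xi & tot xi = tot eta]).

Definition consistent (Lam : pred nat) (q : conf -> conf -> R) : Prop :=
  forall (f : conf -> R) (eta : conf), inOmega Lam eta ->
    gen q (annih f) eta = annih (gen q f) eta.

(* E_eta[f(eta(t))] = (e^{tL} f)(eta): transition semigroup of the process
   (on each finite level set {tot = N} the process is a finite-state chain) *)
Definition expect (q : conf -> conf -> R) (f : conf -> R) (t : R) (eta : conf) : R :=
  limn (fun n => \sum_(k < n) t ^+ k / (k`!)%:R * iter k (gen q) f eta).

End ConfigProcess.

(* Main.v *)
Require Import Defs.
From HB Require Import structures.
From mathcomp Require Import all_boot all_order all_algebra.
From mathcomp Require Import all_classical all_reals all_analysis.
From mathcomp Require Import ring lra.
Import Order.TTheory GRing.Theory Num.Theory numFieldNormedType.Exports.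
Set Implicit Arguments. Unset Strict Implicit.
Local Open Scope ring_scope.

Lemma gen_ext (V : finType) (R : realType) (q : conf V -> conf V -> R) (h1 h2 : conf V -> R) eta :
  (forall x, h1 x = h2 x) -> gen q h1 eta = gen q h2 eta.
Proof. by move=> E; apply: eq_bigr => g _; rewrite !E. Qed.

Lemma gen_congr (V : finType) (R : realType) Lam (q : conf V -> conf V -> R) (h1 h2 : conf V -> R) eta :
  config_process Lam q ->
  (forall x, inOmega Lam x -> h1 x = h2 x) -> gen q h1 eta = gen q h2 eta.
Proof.
move=> [_ Hq] E; apply: eq_bigr => g _.
have [->|/Hq [He Hx _]] := eqVneq (q eta (lift_conf g)) 0; first by rewrite !mul0r.
by rewrite !E.
Qed.

Lemma gen_sum (V : finType) (R : realType) (q : conf V -> conf V -> R) (I : Type) (s : seq I)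
  (h : I -> conf V -> R) eta :
  gen q (fun x => \sum_(i <- s) h i x) eta = \sum_(i <- s) gen q (h i) eta.
Proof.
rewrite /gen exchange_big /=; apply: eq_bigr => g _.
by rewrite -sumrB mulr_sumr.
Qed.

Lemma iter_sum (V : finType) (R : realType) (q : conf V -> conf V -> R) (I : Type) (s : seq I)
  (h : I -> conf V -> R) k eta :
  iter k (gen q) (fun x => \sum_(i <- s) h i x) eta = \sum_(i <- s) iter k (gen q) (h i) eta.
Proof.
elim: k eta => [//|k IH] eta /=.
by rewrite (@gen_ext _ _ _ _ (fun x => \sum_(i <- s) iter k (gen q) (h i) x) _ IH) gen_sum.
Qed.

Lemma iter_comm (V : finType) (R : realType) Lam (q : conf V -> conf V -> R) (f : conf V -> R) k eta :
  config_process Lam q -> consistent Lam q -> inOmega Lam eta ->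
  iter k (gen q) (annih f) eta = annih (iter k (gen q) f) eta.
Proof.
move=> Hp Hc; elim: k eta => [//|k IH] eta He /=.
by rewrite (@gen_congr _ _ _ _ _ (annih (iter k (gen q) f)) _ Hp IH) Hc.
Qed.
Lemma lim_sumR (R : realType) (I : Type) (s : seq I) (u : I -> nat -> R) :
  (forall i, cvgn (u i)) ->
  cvgn (fun n => \sum_(i <- s) u i n) /\
  limn (fun n => \sum_(i <- s) u i n) = \sum_(i <- s) limn (u i).
Proof.
move=> cu; elim: s => [|a s [c IH]].
- have -> : (fun n : nat => \sum_(i <- [::]) u i n) = fun=> 0
    by apply/funext => n; rewrite big_nil.
  by rewrite big_nil; split; [exact: is_cvg_cst | exact: lim_cst].
- have -> : (fun n => \sum_(i <- a :: s) u i n) = (u a + (fun n => \sum_(i <- s) u i n))%R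
    by apply/funext => n; rewrite big_cons.
  rewrite big_cons; split; [exact: is_cvgD | by rewrite limD // IH].
Qed.

Lemma limMc (R : realType) (c : R) (u : nat -> R) : cvgn u ->
  cvgn (fun n => c * u n) /\ limn (fun n => c * u n) = c * limn u.
Proof.
move=> cu.
have -> : (fun n => c * u n) = ((fun=> c) \* u)%R by [].
split; first exact: is_cvgMr.
rewrite limM //; last exact: is_cvg_cst.
by rewrite lim_cst.
Qed.

Definition lev (V : finType) N (g : {ffun V -> 'I_N.+1}) := tot (lift_conf g) == N.

Definition Bnd (V : finType) (R : realType) N (h : conf V -> R) : R :=
  \sum_(g : {ffun V -> 'I_N.+1} | lev g) `|h (lift_conf g)|.

Definition CC (V : finType) (R : realType) (q : conf V -> conf V -> R) N : R :=
  2 * \sum_(g : {ffun V -> 'I_N.+1}) \sum_(g' : {ffun V -> 'I_N.+1})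
        `|q (lift_conf g) (lift_conf g')|.

Lemma gen_lvl (V : finType) (R : realType) (q : conf V -> conf V -> R) N h eta :
  tot eta = N -> gen q h eta =
  \sum_(g : {ffun V -> 'I_N.+1} | lev g) q eta (lift_conf g) * (h (lift_conf g) - h eta).
Proof. by move=> E; subst N. Qed.

Lemma sub_sum (R : realType) (T : finType) (P : pred T) (F : T -> R) :
  (forall x, 0 <= F x) -> \sum_(x | P x) F x <= \sum_x F x.
Proof.
move=> F0; rewrite [X in _ <= X](bigID P) /= lerDl; exact: sumr_ge0.
Qed.

Lemma pt_le (V : finType) (R : realType) N (h : conf V -> R) x :
  tot x = N -> `|h x| <= Bnd N h.
Proof.
move=> E.
have xle : forall v, (x v < N.+1)%N.
  by move=> v; rewrite ltnS -E /tot (bigD1 v) //= leq_addr.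
pose g0 : {ffun V -> 'I_N.+1} := [ffun v => Ordinal (xle v)].
have L : lift_conf g0 = x by apply/ffunP => v; rewrite !ffunE.
have Lg : lev g0 by rewrite /lev L E.
rewrite /Bnd (bigD1 g0) //= L lerDl; exact: sumr_ge0.
Qed.

Lemma CC_ge0 (V : finType) (R : realType) (q : conf V -> conf V -> R) N : 0 <= CC q N.
Proof. by rewrite /CC mulr_ge0 // sumr_ge0 // => g _; rewrite sumr_ge0. Qed.

Lemma Bnd_ge0 (V : finType) (R : realType) N (h : conf V -> R) : 0 <= Bnd N h.
Proof. by rewrite /Bnd sumr_ge0. Qed.

Lemma Bnd_gen (V : finType) (R : realType) (q : conf V -> conf V -> R) N h :
  Bnd N (gen q h) <= CC q N * Bnd N h.
Proof.
set B := Bnd N h.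
have B0 : 0 <= B by exact: Bnd_ge0.
apply: (le_trans (y := \sum_(g : {ffun V -> 'I_N.+1} | lev g)
   (\sum_(g' : {ffun V -> 'I_N.+1}) `|q (lift_conf g) (lift_conf g')|) * (2 * B))).
  rewrite /Bnd; apply: ler_sum => g Lg.
  rewrite (gen_lvl _ _ (eqP Lg)).
  apply: le_trans (ler_norm_sum _ _ _) _.
  rewrite mulr_suml.
  apply: (le_trans (y := \sum_(g' : {ffun V -> 'I_N.+1} | lev g')
     `|q (lift_conf g) (lift_conf g')| * (2 * B))); last first.
    by apply: sub_sum => g'; rewrite mulr_ge0 // mulr_ge0.
  apply: ler_sum => g' Lg'.
  rewrite normrM ler_wpM2l //.
  apply: le_trans (ler_normB _ _) _.
  have := pt_le h (eqP Lg'); have := pt_le h (eqP Lg); rewrite -/B => H1 H2.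
  rewrite mulr_natl mulr2n; exact: lerD.
apply: le_trans (sub_sum _ _) _.
  by move=> g; rewrite mulr_ge0 // ?sumr_ge0 // mulr_ge0.
by rewrite -mulr_suml /CC mulrCA mulrA.
Qed.

Lemma iter_bound (V : finType) (R : realType) (q : conf V -> conf V -> R) N h k :
  Bnd N (iter k (gen q) h) <= CC q N ^+ k * Bnd N h.
Proof.
elim: k => [|k IH] /=; first by rewrite expr0 mul1r.
apply: le_trans (Bnd_gen _ _ _) _.
by rewrite exprS -mulrA ler_wpM2l // CC_ge0.
Qed.

Lemma expect_cvg (V : finType) (R : realType) (q : conf V -> conf V -> R) h (t : R) eta :
  cvgn (fun n => \sum_(k < n) t ^+ k / (k`!)%:R * iter k (gen q) h eta).
Proof.
set N := tot eta. set C := CC q N. set B := Bnd N h.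
have B0 : 0 <= B by exact: Bnd_ge0.
have C0 : 0 <= C by exact: CC_ge0.
set a := fun k => t ^+ k / (k`!)%:R * iter k (gen q) h eta.
have -> : (fun n => \sum_(k < n) t ^+ k / (k`!)%:R * iter k (gen q) h eta) = series a.
  by apply/funext => n; rewrite /series /= big_mkord.
apply: normed_cvg.
apply: (series_le_cvg (v_ := fun k => B * exp_coeff (`|t| * C) k)).
- by move=> n; rewrite normr_ge0.
- by move=> n; rewrite mulr_ge0 // /exp_coeff /= divr_ge0 // exprn_ge0 // mulr_ge0.
- move=> k /=.
  have H : `|iter k (gen q) h eta| <= C ^+ k * B.
    exact: le_trans (pt_le _ (erefl _)) (iter_bound _ _ _ _).
  rewrite /a /exp_coeff /= normrM normf_div normr_nat normrX exprMn.
  rewrite (_ : B * _ = (`|t| ^+ k / (k`!)%:R) * (C ^+ k * B)); last by rewrite mulrC -!mulrA; congr (_ * _); rewrite mulrC -!mulrA; congr (_ * _); rewrite mulrC.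
  by rewrite ler_wpM2l // divr_ge0 // exprn_ge0.
- have -> : series (fun k => B * exp_coeff (`|t| * C) k)
           = (fun n => B * series (exp_coeff (`|t| * C)) n).
    by apply/funext => n; rewrite /series /= mulr_sumr.
  exact: (limMc B (is_cvg_series_exp_coeff _)).1.
Qed.

Theorem proposition3p5 (V : finType) (R : realType) (Lam : pred nat)
  (q : conf V -> conf V -> R) :
  down_closed Lam ->
  config_process Lam q ->
  consistent Lam q ->
  forall (f : conf V -> R) (eta : conf V) (t : R),
    inOmega Lam eta -> 0 <= t ->
    \sum_(i : V) expect q (fun xi => (xi i)%:R * f (subdelta xi i)) t eta
    = \sum_(i : V) (eta i)%:R * expect q f t (subdelta eta i).
Proof.
move=> Hd Hp Hc f eta t He t0.
pose g := fun i (xi : conf V) => (xi i)%:R * f (subdelta xi i).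
rewrite /expect.
rewrite -(@lim_sumR _ _ (index_enum V) _ (fun i => @expect_cvg _ _ q (g i) t eta)).2.
under eq_bigr => i _ do
  rewrite -(limMc (eta i)%:R (@expect_cvg _ _ q f t (subdelta eta i))).2.
rewrite -(@lim_sumR _ _ (index_enum V) _ (fun i => (limMc (eta i)%:R (@expect_cvg _ _ q f t (subdelta eta i))).1)).2.
apply: (f_equal (fun u : nat -> R => limn u)); apply/funext => n.
under [RHS]eq_bigr => i _ do rewrite mulr_sumr.
rewrite exchange_big [RHS]exchange_big /=.
apply: eq_bigr => k _.
rewrite -mulr_sumr -(@iter_sum _ _ q _ (index_enum V) g).
rewrite (_ : (fun x => \sum_(i <- index_enum V) g i x) = annih f) //.
rewrite (iter_comm _ _ Hp Hc He) /annih mulr_sumr.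
by apply: eq_bigr => i _; rewrite mulrCA.
Qed.
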